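(* Let $A$ be a minimally AP-irreducible sign pattern matrix of order $n$ with all diagonal entries equal to $0$. If $A[\alpha,\beta]$ contains no $+$ for any two distinct irreducible components $\alpha$ and $\beta$ of $A_+$, then $A$ has at most $2n-2$ nonzero entries. Consequently, at least two rows of $A$ and at least two columns of $A$ contain precisely one nonzero entry.
   Context: A sign pattern matrix has entries in $\{+,-,0\}$. The digraph $D(M)$ of an $n\times n$ matrix $M$ has vertex set $\{1,\dots,n\}$ and an arc $i\to j$ iff $m_{ij}\neq0$; $M$ is irreducible if $n=1$ or $D(M)$ is strongly connected. For a sign pattern $A$: $A_+$ is obtained by replacing every entry that is not $+$ by $0$; $A_-$ by replacing every entry that is not $-$ by $0$; $B_A=A_+-(A_-)^T$, i.e. $(B_A)_{ij}=+$ if $a_{ij}=+$ or $a_{ji}=-$, and $0$ otherwise. An irreducible sign pattern $A$ is AP-irreducible if every row and every column contains a $+$ and $B_A$ is irreducible; $A$ is minimally AP-irreducible if it is AP-irreducible and does not remain AP-irreducible after replacing any single nonzero entry by $0$. $A[\alpha,\beta]$ is the submatrix with rows in $\alpha$ and columns in $\beta$, $A[\alpha]=A[\alpha,\alpha]$. The irreducible components of a sign pattern $M$ of order $n$ are the pairwise disjoint nonempty sets partitioning $\{1,\dots,n\}$ that are maximal with respect to $M[\alpha]$ being irreducible (the vertex sets of the strongly connected components of $D(M)$). *)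

(* Defs.v *)
From mathcomp Require Import all_boot all_algebra.
Set Implicit Arguments. Unset Strict Implicit. Unset Printing Implicit Defensive.

Definition sign := option bool.
Definition spos : sign := Some true.
Definition sneg : sign := Some false.
Definition szero : sign := None.

Notation signpat n := ('M[sign]_n).

Definition digraph n (M : signpat n) : rel 'I_n := fun i j => M i j != szero.

Definition irreducible n (M : signpat n) : Prop :=
  n = 1%N \/ forall i j : 'I_n, connect (digraph M) i j.

Definition irreducible_on n (M : signpat n) (alpha : {set 'I_n}) : Prop :=
  #|alpha| = 1%N \/
  forall i j, i \in alpha -> j \in alpha ->
    connect [rel x y | [&& x \in alpha, y \in alpha & digraph M x y]] i j.

Definition irr_component n (M : signpat n) (alpha : {set 'I_n}) : Prop :=
  alpha != set0 /\ irreducible_on M alpha /\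
  forall beta : {set 'I_n}, alpha \subset beta -> irreducible_on M beta -> beta = alpha.

Definition pos_part n (A : signpat n) : signpat n :=
  \matrix_(i, j) (if A i j == spos then spos else szero).
Definition neg_part n (A : signpat n) : signpat n :=
  \matrix_(i, j) (if A i j == sneg then sneg else szero).
(* B_A = A_+ - (A_-)^T : (B_A)_ij = + iff a_ij = + or a_ji = -, else 0. *)
Definition BA n (A : signpat n) : signpat n :=
  \matrix_(i, j) (if (pos_part A i j == spos) || (trmx (neg_part A) i j == sneg)
                  then spos else szero).

Definition AP_irreducible n (A : signpat n) : Prop :=
  [/\ irreducible A,
      (forall i : 'I_n, exists j, A i j = spos),
      (forall j : 'I_n, exists i, A i j = spos) &
      irreducible (BA A)].

Definition zero_entry n (A : signpat n) (i j : 'I_n) : signpat n :=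
  \matrix_(k, l) (if (k == i) && (l == j) then szero else A k l).

Definition min_AP_irreducible n (A : signpat n) : Prop :=
  AP_irreducible A /\
  forall i j : 'I_n, A i j != szero -> ~ AP_irreducible (zero_entry A i j).

Definition nnz n (A : signpat n) : nat :=
  #|[set ij : 'I_n * 'I_n | A ij.1 ij.2 != szero]|.

Definition row_nnz n (A : signpat n) (i : 'I_n) : nat := #|[set j | A i j != szero]|.
Definition col_nnz n (A : signpat n) (j : 'I_n) : nat := #|[set i | A i j != szero]|.

(* Main.v *)
Require Import Defs.
From mathcomp Require Import all_boot all_algebra zify.
Set Implicit Arguments. Unset Strict Implicit. Unset Printing Implicit Defensive.

Lemma connect_rev_sub (T : finType) (R1 R2 : rel T) x y :
  (forall a b, R1 a b -> connect R2 b a) -> connect R1 x y -> connect R2 y x.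
Proof.
move=> H c1.
have : connect [rel a b | R2 b a] x y.
  apply: (connect_sub _ c1) => a b /H h; by rewrite connect_rev.
by rewrite connect_rev.
Qed.

Lemma connect_first (T : finType) (R : rel T) x y :
  connect R x y -> x != y -> exists z, R x z.
Proof.
case/connectP => [[|z p]] /=; first by move=> _ ->; rewrite eqxx.
by case/andP => Hxz _ _ _; exists z.
Qed.

Lemma connect_last (T : finType) (R : rel T) x y :
  connect R x y -> x != y -> exists z, R z y.
Proof.
move=> c nxy.
have c' : connect [rel a b | R b a] y x by rewrite connect_rev.
by case: (connect_first c' _) => [|z Hz]; [rewrite eq_sym | exists z].
Qed.

Lemma card_pairs n (P : 'I_n -> 'I_n -> bool) :
  #|[set ij : 'I_n * 'I_n | P ij.1 ij.2]| = \sum_i #|[set j | P i j]| /\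
  #|[set ij : 'I_n * 'I_n | P ij.1 ij.2]| = \sum_j #|[set i | P i j]|.
Proof.
have E : #|[set ij : 'I_n * 'I_n | P ij.1 ij.2]| = \sum_i \sum_j (P i j : nat).
  rewrite pair_bigA -sum1_card big_mkcond /=; apply: eq_bigr => p _.
  by rewrite inE; case: (P _ _).
have Ec : forall (f : 'I_n -> bool), #|[set j | f j]| = \sum_j (f j : nat).
  move=> f; rewrite -sum1_card big_mkcond /=; apply: eq_bigr => j _.
  by rewrite inE; case: (f _).
split; rewrite E; first by apply: eq_bigr => i _; rewrite Ec.
by rewrite exchange_big; apply: eq_bigr => j _; rewrite Ec.
Qed.

Lemma count_ones n (f : 'I_n -> nat) : 0 < n ->
  (forall i, 0 < f i) -> \sum_i f i <= 2 * n - 2 -> 1 < #|[set i | f i == 1]|.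
Proof.
move=> n0 pos Hs.
have H2 : \sum_i f i + #|[set i | f i == 1]| >= 2 * n.
  have -> : #|[set i | f i == 1]| = \sum_i (f i == 1 : nat).
    rewrite -sum1_card big_mkcond /=; apply: eq_bigr => j _.
    by rewrite inE; case: (_ == _).
  rewrite -big_split /=.
  have -> : 2 * n = \sum_(i < n) 2 by rewrite sum_nat_const card_ord mulnC.
  apply: leq_sum => i _; have := pos i.
  by case: (f i) => [|[|m]] //.
lia.
Qed.
Section Growth.
Variables (T C : finType) (e : rel T) (c : T -> C) (U0 : {set T}).

Definition stepR (S : {set T * T}) : rel T := fun x y => (c x == c y) || ((x, y) \in S).

Definition inv (U : {set T}) (S : {set T * T}) : Prop :=
  [/\ U0 \subset U, (forall p, p \in S -> e p.1 p.2 /\ p.2 \in U),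
     #|S| + #|c @: U0| = #|c @: U|,
     (forall x y, x \in U -> c x = c y -> y \in U) &
     (forall y, y \in U -> exists2 x, x \in U0 & connect (stepR S) x y)].

Hypothesis U0c : forall x y, x \in U0 -> c x = c y -> y \in U0.

Lemma GLk k : exists U, exists S, inv U S /\
  ((forall x y, x \in U -> e x y -> y \in U) \/ (k <= #|U|)%N).
Proof.
elim: k => [|k [U [S [[sU Se cS Uc Ur] H]]]].
  exists U0, set0; split; last by right.
  split=> //; first by move=> p; rewrite inE.
    by rewrite cards0.
  by move=> y Hy; exists y => //; apply: connect0.
case: H => [Hcl|Hk].
  by exists U, S; split=> //; left.
case: (pickP [pred p : T * T | (p.1 \in U) && (p.2 \notin U) && e p.1 p.2]) => [[x y] /= /andP[/andP[xU yU] exy]|none].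
  pose U' := U :|: [set z | c z == c y].
  have yU' : y \in U' by rewrite !inE eqxx orbT.
  have cyU : c y \notin c @: U.
    apply/imsetP => [[z zU czy]]; by rewrite (Uc z y zU (esym czy)) in yU.
  have xyS : (x, y) \notin S by apply/negP => /Se [_ /= ]; rewrite (negbTE yU).
  exists U', ((x, y) |: S); split; last first.
    right; apply: leq_ltn_trans Hk _; apply: proper_card; apply/properP; split.
      by apply/subsetP => z zU; rewrite inE zU.
    by exists y.
  split.
  - by apply: subset_trans sU _; apply/subsetP => z zU; rewrite inE zU.
  - move=> p; rewrite !inE => /orP[/eqP -> | pS] /=; first by rewrite eqxx orbT.
    by case: (Se p pS) => ep pU; rewrite pU.
  - have -> : c @: U' = c y |: c @: U.
      apply/setP => w; rewrite /U' imsetU [in RHS]inE [in LHS]inE orbC; congr (_ || _).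
      rewrite inE; apply/imsetP/eqP => [[z]|->]; first by rewrite inE => /eqP ? ->.
      by exists y; rewrite // inE.
    by rewrite cardsU1 cyU cardsU1 xyS add1n addSn cS.
  - move=> z w; rewrite !inE => /orP[zU|/eqP czy] czw.
      by rewrite (Uc z w zU czw).
    by rewrite -czw czy eqxx orbT.
  - have sub : forall a b, connect (stepR S) a b -> connect (stepR ((x, y) |: S)) a b.
      apply: connect_sub => a b; rewrite /stepR => /orP[H|H]; apply: connect1.
        by rewrite H.
      by rewrite !inE H !orbT.
    move=> w; rewrite !inE => /orP[wU|/eqP cwy]; first by case: (Ur w wU) => x0 ? ?; exists x0 => //; apply: sub.
    case: (Ur x xU) => x0 x0U c0; exists x0 => //.
    apply: connect_trans (sub _ _ c0) _.
    apply: connect_trans (connect1 (_ : stepR _ x y)) _.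
      by rewrite /stepR !inE eqxx orbT.
    by apply: connect1; rewrite /stepR cwy eqxx.
exists U, S; split=> //; left => a b aU eab.
apply: contraFT (none (a, b)) => bU /=; by rewrite aU bU eab.
Qed.

Lemma GL : exists U, exists S, inv U S /\ (forall x y, x \in U -> e x y -> y \in U).
Proof.
case: (GLk #|T|.+1) => U [S [I [H|H]]]; first by exists U, S.
by move: (max_card (mem U)); rewrite leqNgt H.
Qed.
End Growth.
Section Comp.
Variables (n : nat) (A : 'M[sign]_n).
Local Notation dP := (digraph (pos_part A)).

Lemma dPE x y : dP x y = (A x y == spos).
Proof. by rewrite /digraph mxE; case: (A x y) => [[]|]. Qed.

Definition comp x := [set y | connect dP x y && connect dP y x].

Lemma comp_irr x : irr_component (pos_part A) (comp x).
Proof.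
have xx : x \in comp x by rewrite inE connect0.
split; first by apply/set0Pn; exists x.
split.
  right => i j; rewrite !inE => /andP[xi ix] /andP[xj jx].
  have : connect dP i j by apply: connect_trans ix xj.
  case/connectP => p; elim: p i xi ix => [|z p IH] i xi ix /=.
    by move=> _ ->; apply: connect0.
  case/andP => iz pz ej.
  have xz : connect dP x z by apply: connect_trans xi (connect1 iz).
  have zx : connect dP z x.
    apply: connect_trans jx; rewrite ej; apply/connectP; by exists p.
  apply: connect_trans (IH z xz zx pz ej).
  by apply: connect1; rewrite /= !inE xi ix xz zx iz.
move=> beta sb [H1|H2].
  apply/eqP; rewrite eq_sym eqEcard sb H1.
  by rewrite card_gt0; apply/set0Pn; exists x.
apply/eqP; rewrite eqEsubset; apply/andP; split => //.
apply/subsetP => z zb.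
have xb : x \in beta by apply: (subsetP sb).
have sub : forall a b, connect [rel a b | [&& a \in beta, b \in beta & dP a b]] a b -> connect dP a b.
  move=> a b; apply: connect_sub => u v /= /andP[_ /andP[_ h]]; exact: connect1.
by rewrite inE !sub // H2.
Qed.

Hypothesis Hcross : forall alpha beta : {set 'I_n},
      irr_component (pos_part A) alpha -> irr_component (pos_part A) beta ->
      alpha != beta ->
      forall i j, i \in alpha -> j \in beta -> A i j != spos.

Lemma Kpos x y : A x y = spos -> connect dP y x.
Proof.
move=> Axy; apply/negPn/negP => nyx.
have nE : comp x != comp y.
  apply/negP => /eqP E.
  have : y \in comp x by rewrite E inE connect0.
  by rewrite inE (negbTE nyx) andbF.
have := Hcross (comp_irr x) (comp_irr y) nE (_ : x \in comp x) (_ : y \in comp y).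
by rewrite Axy eqxx !inE !connect0 => /(_ isT isT).
Qed.

Lemma dP_sym x y : connect dP x y -> connect dP y x.
Proof.
apply: connect_rev_sub => a b; rewrite dPE => /eqP; exact: Kpos.
Qed.
End Comp.
Lemma irr_mono n (M M' : 'M[sign]_n) :
  (forall i j, M i j != szero -> M' i j != szero) -> irreducible M -> irreducible M'.
Proof.
move=> H [n1|c]; [by left | right => x y].
by apply: (connect_sub _ (c x y)) => a b h; apply: connect1; exact: H.
Qed.

Lemma mono n (B A' : 'M[sign]_n) :
  (forall i j, B i j != szero -> A' i j = B i j) -> AP_irreducible B -> AP_irreducible A'.
Proof.
move=> sub [iB rB cB iBA]; split.
- by apply: irr_mono iB => i j h; rewrite sub.
- by move=> i; case: (rB i) => j h'; exists j; rewrite sub ?h'.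
- by move=> j; case: (cB j) => i h'; exists i; rewrite sub ?h'.
apply: irr_mono iBA => i j; rewrite !mxE.
case E1: (B i j) => [[]|] /=; first by rewrite sub ?E1.
  all: case E2: (B j i) => [[]|] //=; by rewrite (sub j i) ?E2 // orbT.
Qed.

Lemma closed_reach (T : finType) (R : rel T) (U : {set T}) x y :
  (forall a b, a \in U -> R a b -> b \in U) -> x \in U -> connect R x y -> y \in U.
Proof.
move=> cl xU /connectP[p]; elim: p x xU => [|z p IH] x xU /=; first by move=> _ ->.
by case/andP => xz pz e; apply: (IH z (cl x z xU xz) pz e).
Qed.

Theorem lemma3p11 (n : nat) (A : 'M[sign]_n) :
  (0 < n)%N ->
  min_AP_irreducible A ->
  (forall i : 'I_n, A i i = szero) ->
  (forall alpha beta : {set 'I_n},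
      irr_component (pos_part A) alpha -> irr_component (pos_part A) beta ->
      alpha != beta ->
      forall i j, i \in alpha -> j \in beta -> A i j != spos) ->
  (nnz A <= 2 * n - 2)%N /\
  (1 < #|[set i : 'I_n | row_nnz A i == 1%N]|)%N /\
  (1 < #|[set j : 'I_n | col_nnz A j == 1%N]|)%N.
Proof.
move=> n0 [[iA rA cA iBA] minA] diag Hcross.
pose r : 'I_n := Ordinal n0.
have Kp := Kpos Hcross.
have symP := dP_sym Hcross.
have compE : forall x y, (y \in comp A x) = connect (digraph (pos_part A)) x y.
  by move=> x y; rewrite inE; apply/andP/idP => [[]|h] //; split => //; apply: symP.
have comp_eq : forall x y, connect (digraph (pos_part A)) x y -> comp A x = comp A y.
  move=> x y cxy; apply/setP => z; rewrite !compE; apply/idP/idP => h.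
    by apply: connect_trans (symP _ _ cxy) h.
  by apply: connect_trans cxy h.
have comp_eq' : forall x y, comp A x = comp A y -> connect (digraph (pos_part A)) x y.
  by move=> x y e; rewrite -compE e compE connect0.
have strong : forall M : 'M[sign]_n, irreducible M -> forall x y, connect (digraph M) x y.
  move=> M [n1|h] x y //; have -> : x = y; last exact: connect0.
  by apply: ord_inj; move: (ltn_ord x) (ltn_ord y); lia.
have cD := strong _ iA.
have cBA := strong _ iBA.
pose R := [set x : 'I_n | [forall y, connect (digraph (pos_part A)) x y ==> (x <= y)%N]].
have root : forall y, exists2 r0, r0 \in R & connect (digraph (pos_part A)) r0 y.
  move=> y.
  have ex : exists m, [exists z : 'I_n, (val z == m) && connect (digraph (pos_part A)) z y].
    by exists (val y); apply/existsP; exists y; rewrite eqxx connect0.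
  case: (ex_minnP ex) => m /existsP [z /andP[/eqP zm zy]] minm.
  exists z => //; rewrite inE; apply/forallP => w; apply/implyP => zw; rewrite zm.
  by apply: minm; apply/existsP; exists w; rewrite eqxx /=; apply: connect_trans (symP _ _ zw) zy.
have root_uniq : forall r1 r2, r1 \in R -> r2 \in R -> connect (digraph (pos_part A)) r1 r2 -> r1 = r2.
  move=> r1 r2; rewrite !inE => /forallP h1 /forallP h2 c12; apply: val_inj; apply: anti_leq.
  by rewrite (implyP (h1 r2) c12) (implyP (h2 r1) (symP _ _ c12)).
have cardR : #|R| = #|comp A @: [set: 'I_n]|.
  rewrite -(@card_in_imset _ _ (comp A) R); last first.
    by move=> r1 r2 h1 h2 e; apply: root_uniq h1 h2 _; exact: comp_eq' e.
  have -> : comp A @: R = comp A @: [set: 'I_n].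
    apply/eqP; rewrite eqEsubset imsetS ?subsetT //=.
    apply/subsetP => _ /imsetP[y _ ->]; case: (root y) => r0 r0R c.
    by apply/imsetP; exists r0 => //; exact: (esym (comp_eq _ _ c)).
  by [].
have dPE' : forall x y, digraph (pos_part A) x y = (A x y == spos) := dPE A.
case: (@GL _ _ (fun x y => A x y == spos) (fun x => x) R) => [x y h <- //|].
move=> U1 [S1 [[sR1 S1e cS1 _ reach1] cl1]].
have U1T : U1 = setT.
  apply/setP => y; rewrite inE; case: (root y) => r0 r0R c.
  apply: (closed_reach _ _ c); last exact: (subsetP sR1).
  by move=> a b aU; rewrite dPE'; apply: cl1.
have {}cS1 : #|S1| + #|R| = n.
  by move: cS1; rewrite U1T !imset_id cardsT card_ord.
case: (@GL _ _ (fun x y => A y x == spos) (fun x => x) R) => [x y h <- //|].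
move=> U2 [S2 [[sR2 S2e cS2 _ reach2] cl2]].
have U2T : U2 = setT.
  apply/setP => y; rewrite inE; case: (root y) => r0 r0R c.
  have c' : connect [rel a b | digraph (pos_part A) b a] r0 y by rewrite connect_rev /= symP.
  apply: (closed_reach _ _ c'); last exact: (subsetP sR2).
  by move=> a b aU /=; rewrite dPE'; apply: cl2.
have {}cS2 : #|S2| + #|R| = n.
  by move: cS2; rewrite U2T !imset_id cardsT card_ord.
have rr : r \in comp A r by rewrite compE connect0.
have U0c : forall x y, x \in comp A r -> comp A x = comp A y -> y \in comp A r.
  move=> x y; rewrite !compE => rx /comp_eq' xy; exact: connect_trans rx xy.
have ci : comp A @: comp A r = [set comp A r].
  apply/setP => a; rewrite inE; apply/imsetP/eqP => [[z zr ->]|->]; last by exists r.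
  by rewrite compE in zr; rewrite (comp_eq _ _ zr).
case: (@GL _ _ (fun x y => A x y == sneg) (comp A) (comp A r) U0c).
move=> U3 [S3 [[sR3 S3e cS3 Uc3 reach3] cl3]].
have U3T : U3 = setT.
  apply/setP => y; rewrite inE.
  apply: (closed_reach _ _ (cD r y)); last exact: (subsetP sR3).
  move=> a b aU; rewrite /digraph; case E: (A a b) => [[]|] // _.
    by apply: (Uc3 a b aU); apply: comp_eq; apply: connect1; rewrite dPE' E.
  by apply: (cl3 a b aU); rewrite E.
have {}cS3 : #|S3| + 1 = #|comp A @: [set: 'I_n]|.
  by move: cS3; rewrite U3T ci cards1.
case: (@GL _ _ (fun x y => A y x == sneg) (comp A) (comp A r) U0c).
move=> U4 [S4 [[sR4 S4e cS4 Uc4 reach4] cl4]].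
have U4T : U4 = setT.
  apply/setP => y; rewrite inE.
  apply: (closed_reach _ _ (cBA r y)); last exact: (subsetP sR4).
  move=> a b aU; rewrite /digraph /BA !mxE.
  case E: (A a b) => [[]|] /=.
  - by move=> _; apply: (Uc4 a b aU); apply: comp_eq; apply: connect1; rewrite dPE' E.
  - by case E2: (A b a) => [[]|] //= _; apply: (cl4 a b aU); rewrite /= E2.
  - by case E2: (A b a) => [[]|] //= _; apply: (cl4 a b aU); rewrite /= E2.
have {}cS4 : #|S4| + 1 = #|comp A @: [set: 'I_n]|.
  by move: cS4; rewrite U4T ci cards1.
pose sw := fun p : 'I_n * 'I_n => (p.2, p.1).
have swI : injective sw by move=> [? ?] [? ?] [-> ->].
pose H := S1 :|: sw @: S2 :|: S3 :|: sw @: S4.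
have cardH : #|H| <= 2 * n - 2.
  have h1 : forall X Y : {set 'I_n * 'I_n}, #|X :|: Y| <= #|X| + #|Y|.
    by move=> X Y; rewrite cardsU; lia.
  have e : #|S1| + #|S2| + #|S3| + #|S4| = 2 * n - 2 by lia.
  rewrite -e /H; apply: leq_trans (h1 _ _) _; rewrite card_imset // leq_add2r.
  apply: leq_trans (h1 _ _) _; rewrite leq_add2r.
  by apply: leq_trans (h1 _ _) _; rewrite card_imset.
pose B : 'M[sign]_n := (\matrix_(i, j) (if (i, j) \in H then A i j else szero))%R.
have hS1 : forall a b, (a, b) \in S1 -> B a b = spos.
  move=> a b ab; rewrite mxE !inE ab /=; by case: (S1e _ ab) => /eqP.
have hS2 : forall a b, (a, b) \in S2 -> B b a = spos.
  move=> a b ab; rewrite mxE (_ : (b, a) \in H); first by case: (S2e _ ab) => /eqP.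
  by rewrite !inE; apply/orP; left; apply/orP; left; apply/orP; right; apply/imsetP; exists (a, b).
have hS3 : forall a b, (a, b) \in S3 -> B a b = sneg.
  move=> a b ab; rewrite mxE !inE ab /= orbT; by case: (S3e _ ab) => /eqP.
have hS4 : forall a b, (a, b) \in S4 -> B b a = sneg.
  move=> a b ab; rewrite mxE (_ : (b, a) \in H); first by case: (S4e _ ab) => /eqP.
  by rewrite !inE; apply/orP; right; apply/imsetP; exists (a, b).
pose Bp := fun a b => B a b == spos.
have BpA : forall a b, Bp a b -> A a b = spos.
  by move=> a b; rewrite /Bp mxE; case: ifP => // _ /eqP.
have claim1 : forall x y, connect (digraph (pos_part A)) x y -> connect Bp x y.
  move=> x y cxy.
  have xU : x \in U2 by rewrite U2T inE.
  have yU : y \in U1 by rewrite U1T inE.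
  case: (reach2 x xU) => x0 x0R c0.
  case: (reach1 y yU) => y0 y0R c1.
  have c0' : connect Bp x x0.
    apply: (connect_rev_sub _ c0) => a b /orP[/eqP -> | ab]; first exact: connect0.
    by apply: connect1; rewrite /Bp (hS2 _ _ ab).
  have c1' : connect Bp y0 y.
    apply: (connect_sub _ c1) => a b /orP[/eqP -> | ab]; first exact: connect0.
    by apply: connect1; rewrite /Bp (hS1 _ _ ab).
  have BpP : forall a b, connect Bp a b -> connect (digraph (pos_part A)) a b.
    by move=> a b; apply: connect_sub => u v /BpA h; apply: connect1; rewrite dPE' h.
  have e0 : x0 = y0.
    apply: root_uniq x0R y0R _.
    apply: connect_trans (symP _ _ (BpP _ _ c0')) _.
    apply: connect_trans cxy _.
    exact: symP (BpP _ _ c1').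
  by apply: connect_trans c0' _; rewrite e0.
have sameB : forall a b, comp A a = comp A b -> connect Bp a b.
  by move=> a b /comp_eq' /claim1.
pose DB := digraph B.
pose DBA := digraph (BA B).
have BpDB : forall a b, connect Bp a b -> connect DB a b.
  move=> a b; apply: connect_sub => u v h; apply: connect1.
  by rewrite /DB /digraph (eqP h).
have BAE : forall (M : 'M[sign]_n) a b, digraph (BA M) a b = (M a b == spos) || (M b a == sneg).
  move=> M a b; rewrite /digraph /BA !mxE.
  by case: (M a b) => [[]|]; case: (M b a) => [[]|].
have BpDBA : forall a b, connect Bp a b -> connect DBA a b.
  move=> a b; apply: connect_sub => u v h; apply: connect1.
  by rewrite /DBA BAE (eqP h).
have negBA : forall a b, B a b = sneg -> DBA b a.
  by move=> a b h; rewrite /DBA BAE h /= orbT.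
have allU : forall (U : {set 'I_n}) y, U = setT -> y \in U by move=> U y ->; rewrite inE.
have toD : forall x, connect DB x r /\ connect DB r x.
  move=> x; split.
    case: (reach4 x (allU _ _ U4T)) => x1 x1r c.
    have c' : connect DB x x1.
      apply: (connect_rev_sub _ c) => a b /orP[/eqP e | ab].
        by apply: BpDB; apply: sameB.
      by apply: connect1; rewrite /DB /digraph (hS4 _ _ ab).
    apply: connect_trans c' _; apply: BpDB; apply: claim1.
    by rewrite compE in x1r; apply: symP.
  case: (reach3 x (allU _ _ U3T)) => x0 x0r c.
  have c' : connect DB x0 x.
    apply: (connect_sub _ c) => a b /orP[/eqP e | ab].
      by apply: BpDB; apply: sameB.
    by apply: connect1; rewrite /DB /digraph (hS3 _ _ ab).
  apply: connect_trans c'; apply: BpDB; apply: claim1.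
  by rewrite compE in x0r.
have toBA : forall x, connect DBA x r /\ connect DBA r x.
  move=> x; split.
    case: (reach3 x (allU _ _ U3T)) => x1 x1r c.
    have c' : connect DBA x x1.
      apply: (connect_rev_sub _ c) => a b /orP[/eqP e | ab].
        by apply: BpDBA; apply: sameB.
      by apply: connect1; apply: negBA; rewrite (hS3 _ _ ab).
    apply: connect_trans c' _; apply: BpDBA; apply: claim1.
    by rewrite compE in x1r; apply: symP.
  case: (reach4 x (allU _ _ U4T)) => x0 x0r c.
  have c' : connect DBA x0 x.
    apply: (connect_sub _ c) => a b /orP[/eqP e | ab].
      by apply: BpDBA; apply: sameB.
    by apply: connect1; apply: negBA; rewrite (hS4 _ _ ab).
  apply: connect_trans c'; apply: BpDBA; apply: claim1.
  by rewrite compE in x0r.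
have APB : AP_irreducible B.
  split.
  - right => x y; apply: connect_trans (proj1 (toD x)) (proj2 (toD y)).
  - move=> i; case: (rA i) => j Aij.
    have nij : i != j by apply/eqP => e; move: Aij; rewrite e diag.
    have : connect Bp i j by apply: claim1; apply: connect1; rewrite dPE' Aij.
    by case/connect_first => // z /eqP; exists z.
  - move=> j; case: (cA j) => i Aij.
    have nij : i != j by apply/eqP => e; move: Aij; rewrite e diag.
    have : connect Bp i j by apply: claim1; apply: connect1; rewrite dPE' Aij.
    by case/connect_last => // z /eqP; exists z.
  - right => x y; apply: connect_trans (proj1 (toBA x)) (proj2 (toBA y)).
have inH : forall i j, A i j != szero -> (i, j) \in H.
  move=> i j nz; apply/negPn/negP => nH; apply: (minA i j nz); apply: (mono _ APB).
  move=> a b; rewrite /zero_entry !mxE; case abH: ((a, b) \in H); last by rewrite eqxx.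
  move=> _; case: ifP => // /andP[/eqP ea /eqP eb].
  by move: nH; rewrite -ea -eb abH.
have nnzH : nnz A <= 2 * n - 2.
  apply: leq_trans cardH; apply: subset_leq_card; apply/subsetP => [[i j]].
  by rewrite inE => /inH.
have [E1 E2] := card_pairs (fun i j => A i j != szero).
split => //; split.
  apply: count_ones => //; last by rewrite -E1.
  move=> i; rewrite card_gt0; apply/set0Pn; case: (rA i) => j h; exists j.
  by rewrite inE h.
apply: count_ones => //; last by rewrite -E2.
move=> j; rewrite card_gt0; apply/set0Pn; case: (cA j) => i h; exists i.
by rewrite inE h.
Qed.
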